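(* Let $p$ be a prime, let $C=\langle t\rangle$ be the infinite cyclic group and $C\otimes\mathbb Z_p=\{t^\alpha:\alpha\in\mathbb Z_p\}$ the group of $p$-adic integers written multiplicatively. Let $\tau:C\otimes\mathbb Z_p\to\mathbb Z/p[\![x]\!]$ be the continuous multiplicative homomorphism with $\tau(t)=1-x$, and consider the induced ring homomorphism $\mathbb Z/p[C\otimes\mathbb Z_p]\to\mathbb Z/p[\![x]\!]$ from the (discrete) group algebra. Then the kernel of the multiplication map $$\mathbb Z/p[\![x]\!]\otimes_{\mathbb Z/p[C\otimes\mathbb Z_p]}\mathbb Z/p[\![x]\!]\longrightarrow \mathbb Z/p[\![x]\!],\qquad a\otimes b\mapsto ab,$$ is uncountable.
   Context: $\tau(t^\alpha)=(1-x)^\alpha$, well defined and continuous since $(1-x)^{p^i}=1-x^{p^i}$. $\mathbb Z/p[C\otimes\mathbb Z_p]$ is the group algebra of the abstract group $C\otimes\mathbb Z_p$, and $\mathbb Z/p[\![x]\!]$ is a module over it via this ring homomorphism. *)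

(* Defs.v *)
From mathcomp Require Import all_boot all_algebra.
Set Implicit Arguments. Unset Strict Implicit. Unset Printing Implicit Defensive.
Import GRing.Theory.
Local Open Scope ring_scope.

Definition pser (p : nat) := nat -> 'F_p.
Definition ps_zero (p : nat) : pser p := fun _ => 0.
Definition ps_add (p : nat) (f g : pser p) : pser p := fun k => f k + g k.
Definition ps_mul (p : nat) (f g : pser p) : pser p :=
  fun k => \sum_(i < k.+1) f i * g (k - i)%N.

(* p-adic integers as compatible sequences of residues a_n mod p^n.
   The element alpha corresponds to t^alpha in C (x) Z_p. *)
Record padic (p : nat) := Padic {
  padic_seq : nat -> nat;
  padic_bound : forall n, (padic_seq n < p ^ n)%N;
  padic_compat : forall n, (padic_seq n.+1 %% p ^ n)%N = padic_seq n }.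

(* tau(t^alpha) = (1-x)^alpha: its k-th coefficient is (-1)^k binom(alpha,k)
   mod p, computed via the residue of alpha mod p^k (k < p^k). *)
Definition tau (p : nat) (a : padic p) : pser p :=
  fun k => (-1) ^+ k * ('C(padic_seq a k, k))%:R.

(* Elements of the group algebra Z/p[C (x) Z_p] as finite formal sums
   sum c_i t^{alpha_i}, and the induced ring homomorphism to Z/p[[x]]. *)
Definition grpalg (p : nat) := seq ('F_p * padic p).
Definition ga_hom (p : nat) (r : grpalg p) : pser p :=
  fun k => \sum_(c <- r) c.1 * tau c.2 k.

Definition balanced (p : nat) (M : zmodType) (beta : pser p -> pser p -> M) : Prop :=
  [/\ forall a a' b, beta (ps_add a a') b = beta a b + beta a' b,
      forall a b b', beta a (ps_add b b') = beta a b + beta a b' &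
      forall (r : grpalg p) a b,
        beta (ps_mul (ga_hom r) a) b = beta a (ps_mul (ga_hom r) b)].

(* Elements of Z/p[[x]] (x)_{Z/p[C (x) Z_p]} Z/p[[x]] are represented by finite
   sums of pure tensors sum a_i (x) b_i; two such sums denote the same element
   iff every balanced map agrees on them (universal property of the tensor
   product). *)
Definition tensor (p : nat) := seq (pser p * pser p).
Definition tensor_eq (p : nat) (u v : tensor p) : Prop :=
  forall (M : zmodType) (beta : pser p -> pser p -> M), balanced beta ->
    \sum_(ab <- u) beta ab.1 ab.2 = \sum_(ab <- v) beta ab.1 ab.2.

Definition tmult (p : nat) (u : tensor p) : pser p :=
  fun k => \sum_(ab <- u) ps_mul ab.1 ab.2 k.

(* Main.v *)
Require Import Defs.
From mathcomp Require Import all_boot all_algebra.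
From HB Require Import structures.
From mathcomp Require Import boolp classical_sets.
From mathcomp Require Import zify ring.
Set Implicit Arguments. Unset Strict Implicit. Unset Printing Implicit Defensive.
Import GRing.Theory.
Local Open Scope ring_scope.
Local Notation "x %:F" := (@FracField.tofrac _ x).

Section PS.
Variable p : nat.
Local Notation R := (pser p).

HB.instance Definition _ := Choice.copy R (nat -> 'F_p).

Definition ps_opp (f : R) : R := fun k => - f k.
Definition ps_one : R := fun k => (k == 0%N)%:R.

Lemma ps_addA : associative (@ps_add p).
Proof. by move=> f g h; apply: funext => k; rewrite /ps_add addrA. Qed.
Lemma ps_addC : commutative (@ps_add p).
Proof. by move=> f g; apply: funext => k; rewrite /ps_add addrC. Qed.
Lemma ps_add0 : left_id (ps_zero p) (@ps_add p).
Proof. by move=> f; apply: funext => k; rewrite /ps_add /ps_zero add0r. Qed.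
Lemma ps_addN : left_inverse (ps_zero p) ps_opp (@ps_add p).
Proof. by move=> f; apply: funext => k; rewrite /ps_add /ps_opp /ps_zero addNr. Qed.

HB.instance Definition _ := GRing.isZmodule.Build R ps_addA ps_addC ps_add0 ps_addN.

Definition trunc (n : nat) (f : R) : {poly 'F_p} := \poly_(i < n) f i.

Lemma ps_mulE n (f g : R) k : (k < n)%N -> ps_mul f g k = (trunc n f * trunc n g)`_k.
Proof.
move=> kn; rewrite coefM /ps_mul; apply: eq_bigr => i _.
have ik : (i < n)%N by apply: leq_ltn_trans kn; rewrite -ltnS.
have ki : (k - i < n)%N by apply: leq_ltn_trans kn; apply: leq_subr.
by rewrite !coef_poly ik ki.
Qed.

Lemma ps_mulP n (f g : R) (a b : {poly 'F_p}) k :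
  (forall i, (i < n)%N -> a`_i = f i) -> (forall i, (i < n)%N -> b`_i = g i) ->
  (k < n)%N -> ps_mul f g k = (a * b)`_k.
Proof.
move=> af bg kn; rewrite coefM /ps_mul; apply: eq_bigr => i _.
have ik : (i < n)%N by apply: leq_ltn_trans kn; rewrite -ltnS.
have ki : (k - i < n)%N by apply: leq_ltn_trans kn; apply: leq_subr.
by rewrite af // bg.
Qed.

Lemma truncE n (f : R) i : (i < n)%N -> (trunc n f)`_i = f i.
Proof. by move=> ilt; rewrite coef_poly ilt. Qed.

Lemma ps_mulC : commutative (@ps_mul p).
Proof.
move=> f g; apply: funext => k.
by rewrite (@ps_mulE k.+1) // (@ps_mulE k.+1) // mulrC.
Qed.

Lemma ps_mulA : associative (@ps_mul p).
Proof.
move=> f g h; apply: funext => k.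
have tE := truncE (n := k.+1).
rewrite (@ps_mulP k.+1 f _ (trunc k.+1 f) (trunc k.+1 g * trunc k.+1 h)) ?ltnSn //; last 2 first.
- by move=> *; rewrite tE.
- by move=> i ilt; rewrite (@ps_mulP k.+1 g h (trunc k.+1 g) (trunc k.+1 h)) // => *; rewrite tE.
rewrite (@ps_mulP k.+1 _ h (trunc k.+1 f * trunc k.+1 g) (trunc k.+1 h)) ?ltnSn ?mulrA //.
- by move=> i ilt; rewrite (@ps_mulP k.+1 f g (trunc k.+1 f) (trunc k.+1 g)) // => *; rewrite tE.
- by move=> *; rewrite tE.
Qed.

Lemma ps_mul1 : left_id ps_one (@ps_mul p).
Proof.
move=> f; apply: funext => k.
rewrite /ps_mul big_ord_recl /ps_one /= mul1r subn0 big1 ?addr0 // => i _.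
by rewrite mul0r.
Qed.

Lemma ps_mulDl : left_distributive (@ps_mul p) (@ps_add p).
Proof.
move=> f g h; apply: funext => k.
by rewrite /ps_mul /ps_add -big_split /=; apply: eq_bigr => i _; rewrite mulrDl.
Qed.

Lemma ps_one_neq0 : ps_one != ps_zero p.
Proof.
apply/eqP => /(congr1 (fun f => f 0%N)); rewrite /ps_one /ps_zero /= => /eqP.
by rewrite oner_eq0.
Qed.

HB.instance Definition _ := GRing.Zmodule_isComNzRing.Build R ps_mulA ps_mulC ps_mul1 ps_mulDl ps_one_neq0.

End PS.

Section PS2.
Variable p : nat.
Local Notation R := (pser p).

Lemma psmulE (f g : R) : f * g = ps_mul f g. Proof. by []. Qed.
Lemma psaddE (f g : R) : f + g = ps_add f g. Proof. by []. Qed.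
Lemma ps0E : (0 : R) = ps_zero p. Proof. by []. Qed.
Lemma ps1E : (1 : R) = ps_one p. Proof. by []. Qed.
Lemma psaddK (f g : R) k : (f + g) k = f k + g k. Proof. by []. Qed.
Lemma psoppK (f : R) k : (- f) k = - f k. Proof. by []. Qed.
Lemma ps0K k : (0 : R) k = 0. Proof. by []. Qed.
Lemma psbK (f g : R) k : (f - g) k = f k - g k. Proof. by []. Qed.
Lemma ps1K k : (1 : R) k = (k == 0%N)%:R. Proof. by []. Qed.
Lemma pssumK I (r : seq I) (P : pred I) (F : I -> R) k :
  (\sum_(i <- r | P i) F i) k = \sum_(i <- r | P i) F i k.
Proof. by elim/big_rec2: _ => // i y1 y2 _ <-. Qed.

Lemma ps_mul_low (f g : R) a b :
  (forall i, (i < a)%N -> f i = 0) -> (forall j, (j < b)%N -> g j = 0) ->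
  (f * g) (a + b)%N = f a * g b /\ forall k, (k < a + b)%N -> (f * g) k = 0.
Proof.
move=> fa gb; split.
  have ha : (a < (a+b).+1)%N by rewrite ltnS leq_addr.
  rewrite psmulE /ps_mul (bigD1 (Ordinal ha)) //= addKn.
  rewrite big1 ?addr0 // => i ia.
  have jne : (nat_of_ord i != a) by apply: contra ia => /eqP e; apply/eqP/val_inj.
  move: (nat_of_ord i) (ltn_ord i) jne => {ia} j; rewrite ltnS => jab jne.
  have [jlt|jge] := ltnP j a; first by rewrite fa ?mul0r.
  rewrite gb ?mulr0 //.
  have ja' : (a < j)%N by rewrite ltn_neqAle jge andbT eq_sym.
  by rewrite ltn_subLR //; lia.
move=> k kab; rewrite psmulE /ps_mul big1 // => i _.
have [ilt|ige] := ltnP i a; first by rewrite fa ?mul0r.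
rewrite gb ?mulr0 //.
have := ltn_ord i; rewrite ltnS => ik.
by rewrite ltn_subLR //; lia.
Qed.

Lemma ps_neq0 (f : R) : f != 0 -> exists i, f i != 0.
Proof.
move=> /eqP fn0; apply: contra_notP fn0 => H; apply: funext => k.
by apply/eqP; apply: contra_notT H => H; exists k.
Qed.

Lemma ps_idomain : GRing.integral_domain_axiom R.
Proof.
move=> f g /eqP fg0; apply: contraLR fg0; rewrite negb_or => /andP[/ps_neq0 fn /ps_neq0 gn].
pose a := ex_minn fn; pose b := ex_minn gn.
have [fa fa0 fmin] : [/\ f a != 0, forall i, (i < a)%N -> f i = 0 & True].
  rewrite /a; case: ex_minnP => m fm mmin; split => // i im; apply/eqP.
  by apply: contraTT im => /mmin; rewrite -leqNgt.
have [gb gb0 _] : [/\ g b != 0, forall i, (i < b)%N -> g i = 0 & True].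
  rewrite /b; case: ex_minnP => m fm mmin; split => // i im; apply/eqP.
  by apply: contraTT im => /mmin; rewrite -leqNgt.
have [e _] := ps_mul_low fa0 gb0.
apply/eqP => fg0; move: e; rewrite fg0 ps0K => /esym /eqP; rewrite mulf_eq0.
by rewrite (negPf fa) (negPf gb).
Qed.

Definition ps_unit : pred R := fun x => `[< exists y, y * x = 1 >].
Definition ps_inv (x : R) : R :=
  match pselect (exists y, y * x = 1) with
  | left e => projT1 (cid e)
  | right _ => x
  end.

Lemma ps_mulVx : {in ps_unit, left_inverse 1 ps_inv *%R}.
Proof.
move=> x; rewrite /ps_unit /ps_inv inE => /asboolP e.
case: pselect => [e'|ne]; first by case: (cid e').
by move/asboolP: e.
Qed.

Lemma ps_unitPl (x y : R) : y * x = 1 -> ps_unit x.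
Proof. by move=> e; apply/asboolP; exists y. Qed.

Lemma ps_invr_out : {in [predC ps_unit], ps_inv =1 id}.
Proof.
move=> x; rewrite inE /ps_unit /ps_inv => /asboolPn ne.
by case: pselect.
Qed.

HB.instance Definition _ := GRing.ComNzRing_hasMulInverse.Build R ps_mulVx ps_unitPl ps_invr_out.
HB.instance Definition _ := GRing.ComUnitRing_isIntegral.Build R ps_idomain.

End PS2.



Local Open Scope classical_set_scope.

Section Ext.
Variable R : idomainType.
Local Notation L := {fraction R}.
Variable S : R -> Prop.
Hypothesis S1 : S 1.
Hypothesis SD : forall a b, S a -> S b -> S (a + b).
Hypothesis SN : forall a, S a -> S (- a).
Hypothesis SM : forall a b, S a -> S b -> S (a * b).
Variable e : R.
Hypothesis he : forall t s, S t -> S s -> t * e = s -> t = 0.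

Lemma S0 : S 0. Proof. by rewrite -(addrN 1); apply: SD => //; apply: SN. Qed.
Lemma SB a b : S a -> S b -> S (a - b). Proof. by move=> ? ?; apply: SD => //; apply: SN. Qed.

Definition good (G : R * L -> Prop) :=
  [/\ forall a y y', G (a, y) -> G (a, y') -> y = y',
      forall a y b z, G (a, y) -> G (b, z) -> G (a + b, y + z),
      forall s a y, S s -> G (a, y) -> G (s * a, s%:F * y) &
      forall s t, S s -> S t -> G (s + t * e, t%:F)].

Definition base (c : R * L) := exists s t, [/\ S s, S t, c.1 = s + t * e & c.2 = t%:F].

Lemma base_good : good base.
Proof.
split.
- move=> a y y' [s [t [Ss St /= -> ->]]] [s' [t' [Ss' St' /= e1 ->]]].
  have : (t - t') * e = s' - s.
    by transitivity ((s + t * e) - s - t' * e); [ring | rewrite e1; ring].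
  move/he => /(_ (SB St St') (SB Ss' Ss)) /eqP; rewrite subr_eq0 => /eqP -> //.
- move=> a y b z [s [t [Ss St /= -> ->]]] [s' [t' [Ss' St' /= -> ->]]].
  exists (s + s'), (t + t'); split => //=; [by apply: SD|by apply: SD| |by rewrite tofracD].
  by rewrite mulrDl addrACA.
- move=> s a y Ss [s1 [t [Ss1 St /= -> ->]]].
  exists (s * s1), (s * t); split => //=; [by apply: SM|by apply: SM| |by rewrite tofracM].
  by rewrite mulrDr mulrA.
- by move=> s t Ss St; exists s, t.
Qed.

Lemma good_zero G : good G -> G (0, 0).
Proof.
case=> _ _ _ hb; have := hb 0 0 S0 S0.
by rewrite mul0r addr0 tofrac0.
Qed.

Lemma good_opp G a y : good G -> G (a, y) -> G (- a, - y).
Proof.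
move=> gG Gay; case: (gG) => _ _ hs _.
have := hs (-1) a y (SN S1) Gay.
by rewrite tofracN tofrac1 !mulN1r.
Qed.

Section Extend.
Variable A : R * L -> Prop.
Hypothesis gA : good A.
Variable a : R.
Hypothesis na : forall y, ~ A (a, y).

Definition ext_z : L :=
  match pselect (exists ty : R * L, [/\ S ty.1, ty.1 != 0 & A (ty.1 * a, ty.2)]) with
  | left ex => let ty := projT1 (cid ex) in ty.2 / ty.1%:F
  | right _ => 0
  end.

Lemma ext_key tau y : S tau -> A (tau * a, y) -> y = tau%:F * ext_z.
Proof.
move=> Stau Ay; case: (gA) => hf hadd hs hb.
rewrite /ext_z; case: pselect => [ex|nex].
  case: (cid ex) => -[t0 y0] /= [St0 t0n0 Ay0].
  have e1 := hs tau _ _ Stau Ay0.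
  have e2 := hs t0 _ _ St0 Ay.
  rewrite mulrA [tau * t0]mulrC -mulrA in e1.
  have := hf _ _ _ e1 e2 => eq.
  have t0F : t0%:F != 0 by rewrite tofrac_eq0.
  by rewrite mulrA eq [t0%:F * y]mulrC -mulrA mulfV // mulr1.
have tau0 : tau = 0.
  apply/eqP; apply: contra_notT nex => tn0; by exists (tau, y).
move: Ay; rewrite tau0 mul0r tofrac0 mul0r => A0.
exact: hf _ _ _ A0 (good_zero gA).
Qed.

Definition ext_set (c : R * L) :=
  exists w yw t, [/\ A (w, yw), S t, c.1 = w + t * a & c.2 = yw + t%:F * ext_z].

Lemma ext_good : good ext_set.
Proof.
case: (gA) => hf hadd hs hb.
split.
- move=> c y y' [w [yw [t [Aw St /= -> ->]]]] [w' [yw' [t' [Aw' St' /= e1 ->]]]].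
  have Ad := hadd _ _ _ _ Aw' (good_opp gA Aw).
  have e2 : w' - w = (t - t') * a.
    by transitivity ((w' + t' * a) - w - t' * a); [ring | rewrite -e1; ring].
  rewrite e2 in Ad; have := ext_key (SB St St') Ad.
  rewrite tofracB => h.
  have -> : yw' = yw + (t%:F - t'%:F) * ext_z by rewrite -h; ring.
  ring.
- move=> c y d z [w [yw [t [Aw St /= -> ->]]]] [w' [yw' [t' [Aw' St' /= -> ->]]]].
  exists (w + w'), (yw + yw'), (t + t'); split => //; [by apply: hadd|by apply: SD| |].
    by rewrite /= mulrDl addrACA.
  by rewrite /= tofracD mulrDl addrACA.
- move=> s c y Ss [w [yw [t [Aw St /= -> ->]]]].
  exists (s * w), (s%:F * yw), (s * t); split => //; [by apply: hs|by apply: SM| |].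
    by rewrite /= mulrDr mulrA.
  by rewrite /= tofracM mulrDr mulrA.
- move=> s t Ss St; exists (s + t * e), t%:F, 0.
  split; [by apply: hb|exact: S0|by rewrite /= mul0r addr0|by rewrite /= tofrac0 mul0r addr0].
Qed.

Lemma ext_proper : A `<` ext_set.
Proof.
split.
  move=> [c y] Acy; exists c, y, 0.
  split; [by []|exact: S0|by rewrite /= mul0r addr0|by rewrite /= tofrac0 mul0r addr0].
move=> /(_ (a, ext_z)) H; apply: (na (y := ext_z)); apply: H.
exists 0, 0, 1.
split; [exact: good_zero|exact: S1|by rewrite /= mul1r add0r|by rewrite /= tofrac1 mul1r add0r].
Qed.

End Extend.

Lemma exists_phi : exists phi : R -> L,
  [/\ forall x y, phi (x + y) = phi x + phi y,
      forall s x, S s -> phi (s * x) = s%:F * phi x,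
      phi 1 = 0 & phi e = 1].
Proof.
pose P := fun G : R * L -> Prop => G = set0 \/ good G.
have [A [PA Amax]] : exists A, P A /\ forall B, A `<` B -> ~ P B.
  apply: Zorn_bigcup => F FP Ftot.
  case: (pselect (exists G, F G /\ exists c, G c)) => [[G0 [FG0 [c0 G0c0]]]|nF]; last first.
    left; apply/seteqP; split => // c [G FG Gc]; apply: nF; exists G; split => //; by exists c.
  have gm : forall G c, F G -> G c -> good G.
    by move=> G c FG Gc; case: (FP G FG) => // G0e; rewrite G0e in Gc.
  right; split.
  - move=> x y y' [G1 F1 G1y] [G2 F2 G2y].
    case: (Ftot _ _ F1 F2) => sub.
      by case: (gm _ _ F2 G2y) => hf _ _ _; apply: hf (sub _ G1y) G2y.
    by case: (gm _ _ F1 G1y) => hf _ _ _; apply: hf G1y (sub _ G2y).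
  - move=> x y u z [G1 F1 G1y] [G2 F2 G2y].
    case: (Ftot _ _ F1 F2) => sub.
      by case: (gm _ _ F2 G2y) => _ hadd _ _; exists G2 => //; apply: hadd (sub _ G1y) G2y.
    by case: (gm _ _ F1 G1y) => _ hadd _ _; exists G1 => //; apply: hadd G1y (sub _ G2y).
  - move=> s x y Ss [G1 F1 G1y]; exists G1 => //.
    by case: (gm _ _ F1 G1y) => _ _ hs _; apply: hs.
  - move=> s t Ss St; exists G0 => //.
    by case: (gm _ _ FG0 G0c0) => _ _ _ hb; apply: hb.
have gA : good A.
  case: PA => // A0; exfalso; apply: (Amax base); last by right; exact: base_good.
  rewrite A0; split => // /(_ (0 + 0 * e, 0%:F)); apply.
  by exists 0, 0; split => //; exact: S0.
have dom : forall x, exists y, A (x, y).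
  move=> x; case: (pselect (exists y, A (x, y))) => // nx; exfalso.
  apply: (Amax (ext_set A x)).
    by apply: ext_proper => // y Ay; apply: nx; exists y.
  by right; apply: ext_good => // y Ay; apply: nx; exists y.
pose phi x := projT1 (cid (dom x)).
have phiA x : A (x, phi x) by rewrite /phi; case: cid.
case: (gA) => hf hadd hs hb.
exists phi; split.
- by move=> x y; apply: hf (phiA _) (hadd _ _ _ _ (phiA x) (phiA y)).
- by move=> s x Ss; apply: hf (phiA _) (hs _ _ _ Ss (phiA x)).
- apply: hf (phiA _) _; have := hb 1 0 S1 S0.
  by rewrite mul0r addr0 tofrac0.
- apply: hf (phiA _) _; have := hb 0 1 S0 S1.
  by rewrite mul1r add0r tofrac1.
Qed.

End Ext.

Local Close Scope classical_set_scope.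

Section Poly.
Variable p : nat.

Definition bpoly (m : nat) : {poly 'F_p} := (1 - 'X) ^+ m.

Lemma bpoly_term m (i : nat) k :
  ((-1) ^+ i * 1 ^+ (m - i) * ('X : {poly 'F_p}) ^+ i *+ 'C(m, i))`_k =
  ((-1) ^+ i * ('C(m, i))%:R) * (k == i)%:R.
Proof.
rewrite expr1n mulr1 coefMn -polyCN -polyC_exp mul_polyC coefZ coefXn.
by rewrite -mulr_natr; ring.
Qed.

Lemma coef_bpoly m k : (bpoly m)`_k = (-1) ^+ k * ('C(m, k))%:R.
Proof.
rewrite /bpoly exprBn coef_sum.
under eq_bigr do rewrite bpoly_term.
have [km|mk] := leqP k m.
  rewrite (bigD1 (Ordinal (n:=m.+1) (m:=k) (leq_ltn_trans km (ltnSn m)))) //= big1.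
    by rewrite eqxx mulr1 addr0.
  by move=> i ik; rewrite (_ : (k == i) = false) ?mulr0 //; apply/negbTE; apply: contra ik => /eqP ki; apply/eqP/val_inj.
rewrite bin_small // mulr0 big1 // => i _.
rewrite (_ : (k == i) = false) ?mulr0 //; apply/negbTE.
by rewrite neq_ltn (leq_trans (ltn_ord i)) ?orbT.
Qed.

Definition lowc q (B : {poly 'F_p}) := forall i, (i < q)%N -> B`_i = (i == 0%N)%:R.

Lemma lowc_coefM q A B k : lowc q B -> (k < q)%N -> (A * B)`_k = A`_k.
Proof.
move=> lB kq; rewrite coefM big_ord_recr /= subnn lB ?(leq_ltn_trans _ kq) // mulr1 big1 ?add0r // => i _.
rewrite lB; last by apply: leq_ltn_trans kq; apply: leq_subr.
by rewrite subn_eq0 leqNgt ltn_ord mulr0.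
Qed.

Lemma lowc_mul q A B : lowc q A -> lowc q B -> lowc q (A * B).
Proof. by move=> lA lB i iq; rewrite (@lowc_coefM q) // lA. Qed.

Lemma lowc1 q : lowc q 1.
Proof. by move=> i _; rewrite coef1. Qed.

Lemma lowcX q A j : lowc q A -> lowc q (A ^+ j).
Proof.
move=> lA; elim: j => [|j IH]; first by rewrite expr0; exact: lowc1.
by rewrite exprS; apply: (@lowc_mul q).
Qed.

Hypothesis hp : prime p.

Lemma lowc_bpoly K : lowc (p ^ K) (bpoly (p ^ K)).
Proof.
have cp : p \in [pchar {poly 'F_p}] by rewrite pchar_poly; exact: pchar_Fp.
rewrite /bpoly exprDn_pchar; last first.
  by rewrite (eq_pnat _ (pcharf_eq cp)) pnatX pnat_id.
move=> i iq; rewrite expr1n coefD coefC exprNn -polyCN -polyC_exp mul_polyC coefZ coefXn.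
rewrite (_ : (i == p ^ K)%N = false); last by rewrite ltn_eqF.
by rewrite /= mulr0 addr0; case: (i == 0%N).
Qed.

Lemma bpoly_mod K m k : (k < p ^ K)%N -> (bpoly m)`_k = (bpoly (m %% p ^ K))`_k.
Proof.
move=> kq; rewrite {1}(divn_eq m (p ^ K)) mulnC /bpoly exprD exprM mulrC.
rewrite (@lowc_coefM (p ^ K)) //; apply: lowcX; exact: lowc_bpoly.
Qed.

End Poly.


Section Cplx.
Variable p : nat.
Hypothesis hp : prime p.
Local Notation R := (pser p).
Let p1 : (1 < p)%N. Proof. exact: prime_gt1. Qed.

Lemma padic_mod (a : padic p) N M : (N <= M)%N -> (padic_seq a M %% p ^ N = padic_seq a N)%N.
Proof.
move=> /subnKC <-; elim: (M - N)%N => [|j IH].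
  by rewrite addn0 modn_small // padic_bound.
by rewrite addnS -IH -(padic_compat a (N + j)) modn_dvdm // dvdn_exp2l // leq_addr.
Qed.

Lemma tau_trunc (a : padic p) N k : (k < p ^ N)%N -> tau a k = (bpoly p (padic_seq a N))`_k.
Proof.
move=> kN; rewrite /tau -coef_bpoly.
have [Nk|kN'] := leqP N k.
  by rewrite (bpoly_mod hp (K := N) _ kN) padic_mod.
have kk : (k < p ^ k)%N by apply: ltn_expl.
by rewrite [RHS](bpoly_mod hp (K := k) _ kk) padic_mod // ltnW.
Qed.

Definition Qp (l : seq ('F_p * nat)) : {poly 'F_p} := \sum_(cm <- l) cm.1 *: bpoly p cm.2.

Definition cplx (J : nat) (s : R) := forall N, exists l,
  [/\ (size l <= J)%N, all (fun cm => cm.2 < p ^ N)%N l & forall k, (k < p ^ N)%N -> s k = (Qp l)`_k].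

Definition Sx (s : R) := exists J, cplx J s.

Lemma Sx1 : Sx 1.
Proof.
exists 1%N => N; exists [:: (1, 0%N)]; split => //=; first by rewrite expn_gt0 (ltnW p1).
move=> k _; rewrite /Qp big_seq1 /= scale1r /bpoly expr0 coef1.
by rewrite ps1K.
Qed.

Lemma SxD a b : Sx a -> Sx b -> Sx (a + b).
Proof.
move=> [J ha] [K hb]; exists (J + K)%N => N.
have [l1 [s1 a1 e1]] := ha N; have [l2 [s2 a2 e2]] := hb N.
exists (l1 ++ l2); split; first by rewrite size_cat leq_add.
  by rewrite all_cat a1 a2.
by move=> k kN; rewrite psaddK e1 // e2 // /Qp big_cat coefD.
Qed.

Lemma SxN a : Sx a -> Sx (- a).
Proof.
move=> [J ha]; exists J => N.
have [l1 [s1 a1 e1]] := ha N.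
exists [seq (- cm.1, cm.2) | cm <- l1]; split; first by rewrite size_map.
  by rewrite all_map.
move=> k kN; rewrite psoppK e1 // /Qp big_map !coef_sum -sumrN.
by apply: eq_bigr => i _; rewrite /= !coefZ mulNr.
Qed.

Lemma SxM a b : Sx a -> Sx b -> Sx (a * b).
Proof.
move=> [J ha] [K hb]; exists (J * K)%N => N.
have [l1 [s1 a1 e1]] := ha N; have [l2 [s2 a2 e2]] := hb N.
exists [seq (x.1 * y.1, ((x.2 + y.2) %% p ^ N)%N) | x <- l1, y <- l2]; split.
- by rewrite size_allpairs leq_mul.
- apply/allP => cm /allpairsP [[x y] [_ _ ->]] /=.
  by rewrite ltn_mod expn_gt0 (ltnW p1).
move=> k kN.
rewrite psmulE (@ps_mulP _ (p ^ N) a b (Qp l1) (Qp l2)) //; last 2 first.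
- by move=> i iN; rewrite e1.
- by move=> i iN; rewrite e2.
rewrite /Qp big_distrl coef_sum big_allpairs_dep coef_sum.
apply: eq_bigr => x _; rewrite big_distrr coef_sum coef_sum; apply: eq_bigr => y _.
rewrite /= -scalerAl -scalerAr scalerA !coefZ /bpoly -exprD -bpoly_mod //.
Qed.

Lemma Sx_ga (r : grpalg p) : Sx (ga_hom r).
Proof.
exists (size r) => N.
exists [seq (c.1, padic_seq c.2 N) | c <- r]; split; first by rewrite size_map.
  by elim: r => //= c r ->; rewrite padic_bound.
move=> k kN; rewrite /ga_hom /Qp big_map coef_sum; apply: eq_bigr => c _.
by rewrite coefZ (tau_trunc _ kN).
Qed.

End Cplx.


Lemma pow_big N : (10 <= N)%N -> (2 * N * N + 10 * N < 2 ^ N)%N.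
Proof.
move=> /subnKC <-; elim: (N - 10)%N => [|j IH]; first by [].
rewrite addnS expnS.
have h : (2 * (10 + j).+1 * (10 + j).+1 + 10 * (10 + j).+1 <= 2 * (2 * (10 + j) * (10 + j) + 10 * (10 + j)))%N by nia.
by apply: (leq_ltn_trans h); rewrite ltn_pmul2l.
Qed.

Section Diag.
Variable p : nat.
Hypothesis hp : prime p.
Local Notation R := (pser p).
Let p1 : (1 < p)%N. Proof. exact: prime_gt1. Qed.
Let p0 : (0 < p)%N. Proof. exact: ltnW. Qed.
Variable dn : nat -> R.

Definition Blk N := {ffun 'I_(p ^ N.+1 - p ^ N) -> 'F_p}.
Definition extend N (Dp : R) (b : Blk N) : R := fun k =>
  if (k < p ^ N)%N then Dp k else
  if insub (k - p ^ N)%N is Some i then b i else 0.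

Definition WC N := ({ffun 'I_N -> 'F_p} * {ffun 'I_N -> 'I_(p ^ N.+2).+1})%type.
Definition Wit N := (('I_N.+1 * 'I_N.+1) * (WC N * WC N))%type.
Definition wl N (cm : WC N) : seq ('F_p * nat) := [seq (cm.1 i, val (cm.2 i)) | i <- enum 'I_N].
Definition pf (q : {poly 'F_p}) : R := fun k => q`_k.

Definition bad N (Dp : R) (b : Blk N) (w : Wit N) : Prop :=
  let sg := Qp (wl w.2.1) in let sg' := Qp (wl w.2.2) in let v := val w.1.2 in
  [/\ forall i, (i < v)%N -> sg`_i = 0, sg`_v != 0 &
      forall k, (k < p ^ N.+1 + v)%N -> (pf sg * (extend Dp b - dn (val w.1.1))) k = sg'`_k].

Lemma extend_low N Dp b k : (k < p ^ N)%N -> extend (N := N) Dp b k = Dp k.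
Proof. by move=> kN; rewrite /extend kN. Qed.

Lemma extend_blk N Dp (b : Blk N) (i : 'I_(p ^ N.+1 - p ^ N)) : extend Dp b (p ^ N + i)%N = b i.
Proof.
rewrite /extend ltnNge leq_addr /= addKn.
case: insubP => [j _ vj|ni]; first by congr (b _); apply: val_inj.
by rewrite ltn_ord in ni.
Qed.

Lemma extend_high N Dp b k : (p ^ N.+1 <= k)%N -> extend (N := N) Dp b k = 0.
Proof.
move=> kN; rewrite /extend ltnNge (leq_trans _ kN) /=; last by rewrite leq_exp2l // ltnW.
case: insubP => [j _ vj|//]; exfalso.
have := ltn_ord j; rewrite vj; have : (p ^ N <= p ^ N.+1)%N by rewrite leq_exp2l // ltnW.
lia.
Qed.

Lemma first_nz (f : R) : f != 0 -> exists v, [/\ f v != 0 & forall i, (i < v)%N -> f i = 0].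
Proof.
move=> /ps_neq0 ex; exists (ex_minn ex); case: ex_minnP => m fm mmin; split => // i im.
by apply/eqP; apply: contraTT im => /mmin; rewrite -leqNgt.
Qed.

Lemma bad_uniq N Dp b b' w : bad (N := N) Dp b w -> bad Dp b' w -> b = b'.
Proof.
case: w => [[n v] [c1 c2]] [/= z1 nz1 e1] [_ _ e2].
set sg := Qp (wl c1) in z1 nz1 e1 e2.
pose E := extend Dp b - extend Dp b'.
have hE : forall k, (k < p ^ N.+1 + v)%N -> (pf sg * E) k = 0.
  move=> k kl; have -> : pf sg * E = pf sg * (extend Dp b - dn n) - pf sg * (extend Dp b' - dn n) by rewrite /E; ring.
  by rewrite psbK e1 // e2 // subrr.
apply/ffunP => i; apply/eqP; apply: contraT => ne.
have Enz : E != 0.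
  apply: contra ne => /eqP E0; have := congr1 (fun f => f (p ^ N + i)%N) E0.
  by rewrite /= /E psbK !extend_blk ps0K => /eqP; rewrite subr_eq0.
have [w0 [Ew0 Elow]] := first_nz Enz.
have w0lt : (w0 < p ^ N.+1)%N.
  rewrite ltnNge; apply/negP => hw; move: Ew0; rewrite /E psbK !extend_high // subrr.
  by rewrite eqxx.
have sglow : forall i, (i < v)%N -> pf sg i = 0 by move=> j jv; rewrite /pf z1.
have [hv _] := ps_mul_low sglow Elow.
move: (hE (v + w0)%N); rewrite hv /pf => /(_ _)/eqP; rewrite mulf_eq0 (negPf nz1) (negPf Ew0).
by apply; rewrite addnC ltn_add2r.
Qed.


Lemma card_Blk N : #|{: Blk N}| = (p ^ (p ^ N.+1 - p ^ N))%N.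
Proof. by rewrite card_ffun !card_ord Fp_cast. Qed.

Lemma card_Wit N : #|{: Wit N}| =
  (N.+1 * N.+1 * ((p ^ N * (p ^ N.+2).+1 ^ N) * (p ^ N * (p ^ N.+2).+1 ^ N)))%N.
Proof. by rewrite !card_prod !card_ffun !card_ord Fp_cast. Qed.

Lemma count_ok N : (10 <= N)%N -> (#|{: Wit N}| < #|{: Blk N}|)%N.
Proof.
move=> N10; rewrite card_Wit card_Blk.
have q1 : ((p ^ N.+2).+1 <= p ^ N.+3)%N.
  rewrite (expnS p N.+2); have : (0 < p ^ N.+2)%N by rewrite expn_gt0 p0.
  have : (2 * p ^ N.+2 <= p * p ^ N.+2)%N by rewrite leq_mul2r p1 orbT.
  move: (p ^ N.+2)%N => q; lia.
have n1 : (N.+1 <= p ^ N)%N.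
  apply: (@leq_trans (2 ^ N)); first by apply: ltn_expl.
  by rewrite leq_exp2r // ltnW // (leq_trans _ N10).
have h1 : (N.+1 * N.+1 * ((p ^ N * (p ^ N.+2).+1 ^ N) * (p ^ N * (p ^ N.+2).+1 ^ N))
   <= p ^ N * p ^ N * ((p ^ N * (p ^ N.+3) ^ N) * (p ^ N * (p ^ N.+3) ^ N)))%N.
  by rewrite !leq_mul // leq_exp2r // (leq_trans _ N10).
apply: (leq_ltn_trans h1).
rewrite -!expnM -!expnD ltn_exp2l //.
have h2 : (2 ^ N <= p ^ N.+1 - p ^ N)%N.
  rewrite expnS -{2}(mul1n (p ^ N)%N) -mulnBl.
  apply: (@leq_trans (p ^ N)%N); first by rewrite leq_exp2r // (leq_trans _ N10).
  by rewrite leq_pmull // subn_gt0.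
apply: leq_trans h2; apply: leq_trans (pow_big N10).
rewrite leq_eqVlt; apply/orP; left; apply/eqP; lia.
Qed.

Lemma exists_good N Dp : (10 <= N)%N -> exists b : Blk N, ~ exists w, bad Dp b w.
Proof.
move=> N10; case: (pselect (exists b : Blk N, ~ exists w, bad Dp b w)) => // nb; exfalso.
have H' : forall b : Blk N, exists w, bad Dp b w.
  move=> b; case: (pselect (exists w, bad Dp b w)) => // nw; exfalso; apply: nb; by exists b.
pose f := fun b => projT1 (cid (H' b)).
have fP b : bad Dp b (f b) by rewrite /f; case: cid.
have finj : injective f.
  by move=> b1 b2 e; apply: (bad_uniq (fP b1)); rewrite e; apply: fP.
by have := @leq_card _ _ f finj; rewrite leqNgt count_ok.
Qed.

Definition choose_blk N (Dp : R) : Blk N :=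
  match pselect (exists b : Blk N, ~ exists w, bad Dp b w) with
  | left ex => projT1 (cid ex)
  | right _ => [ffun => 0]
  end.

Lemma choose_blkP N Dp : (10 <= N)%N -> ~ exists w, bad Dp (choose_blk N Dp) w.
Proof.
move=> N10; rewrite /choose_blk; case: pselect => [ex|nex]; first by case: cid.
by exfalso; apply: nex; apply: exists_good.
Qed.

Fixpoint Dseq N : R := if N is N'.+1 then extend (Dseq N') (choose_blk N' (Dseq N')) else 0.

Definition dd : R := fun k => Dseq k.+1 k.

Lemma Dseq_stable N M k : (N <= M)%N -> (k < p ^ N)%N -> Dseq M k = Dseq N k.
Proof.
move=> /subnKC <- kN; elim: (M - N)%N => [|j IH]; first by rewrite addn0.
rewrite addnS /= extend_low // (leq_trans kN) // leq_exp2l // ?leq_addr //.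
Qed.

Lemma dd_agree N k : (k < p ^ N)%N -> dd k = Dseq N k.
Proof.
move=> kN; rewrite /dd; have [h|h] := leqP k.+1 N.
  by rewrite (Dseq_stable h) // ltnW // ltn_expl.
by rewrite (Dseq_stable (ltnW h)).
Qed.

End Diag.


Section Good.
Variable p : nat.
Hypothesis hp : prime p.
Local Notation R := (pser p).
Let p1 : (1 < p)%N. Proof. exact: prime_gt1. Qed.
Let p0 : (0 < p)%N. Proof. exact: ltnW. Qed.

Let x0 : 'F_p * nat := (0, 0%N).

Definition mkw N (l : seq ('F_p * nat)) : WC p N :=
  ([ffun i : 'I_N => (nth x0 l i).1], [ffun i : 'I_N => inord (nth x0 l i).2]).

Lemma Qp_mkw N l : (size l <= N)%N -> all (fun cm => cm.2 < p ^ N.+2)%N l ->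
  Qp (wl (mkw N l)) = Qp l.
Proof.
move=> sz al.
have -> : wl (mkw N l) = [seq nth x0 l i | i <- iota 0 N].
  rewrite /wl -val_enum_ord -map_comp; apply: eq_map => i /=; rewrite !ffunE inordK.
    by case: (nth x0 l i).
  have [il|il] := ltnP i (size l).
    by apply: ltnW; move/allP: al; apply; apply: mem_nth.
  by rewrite nth_default.
rewrite -(subnKC sz) iotaD map_cat.
have -> : [seq nth x0 l i | i <- iota 0 (size l)] = l by rewrite -[RHS](mkseq_nth x0).
rewrite /Qp big_cat /= [X in _ + X]big_map [X in _ + X]big1_seq ?addr0 // => i /andP [_].
rewrite mem_iota add0n => /andP [il _].
by rewrite nth_default // scale0r.
Qed.

Variable dn : nat -> R.

Lemma dd_good n t s : Sx t -> Sx s -> t * (dd dn - dn n) = s -> t = 0.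
Proof.
move=> [J hJ] [J' hJ'] ets; apply/eqP; apply: contraT => tn0.
have [v [tv tlow]] := first_nz tn0.
pose N := maxn (maxn (maxn n J) (maxn J' v)) 10.
have nN : (n <= N)%N by rewrite /N; lia.
have JN : (J <= N)%N by rewrite /N; lia.
have J'N : (J' <= N)%N by rewrite /N; lia.
have vN : (v <= N)%N by rewrite /N; lia.
have N10 : (10 <= N)%N by rewrite /N; lia.
have [l [sl al el]] := hJ N.+2.
have [l' [sl' al' el']] := hJ' N.+2.
pose w : Wit p N := ((inord n, inord v), (mkw N l, mkw N l')).
exfalso; apply: (choose_blkP hp (dn := dn) (Dp := Dseq dn N) N10); exists w.
rewrite /bad /= !Qp_mkw ?(leq_trans sl') ?(leq_trans sl) // !inordK ?ltnS //.
have pNN : (N < p ^ N.+1)%N by apply: (leq_trans (ltn_expl _ p1)); rewrite leq_exp2l // ltnW.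
have pN2 : (p ^ N.+1 + N < p ^ N.+2)%N.
  rewrite (expnS p N.+1); have : (2 * p ^ N.+1 <= p * p ^ N.+1)%N by rewrite leq_mul2r p1 orbT.
  move: (p ^ N.+1)%N pNN => q; lia.
have vlt : (v < p ^ N.+2)%N by lia.
split.
- by move=> i iv; rewrite -el ?tlow //; lia.
- by rewrite -el.
move=> k kl.
have kN2 : (k < p ^ N.+2)%N by lia.
pose Dn := Dseq dn N.+1.
have id1 : pf (Qp l) * (Dn - dn n) =
   t * (dd dn - dn n) - (t - pf (Qp l)) * (dd dn - dn n) - pf (Qp l) * (dd dn - Dn) by ring.
have := congr1 (fun f => f k) id1; rewrite /= => ->.
rewrite !psbK ets -el' //.
have h1 : forall i, (i < p ^ N.+2)%N -> (t - pf (Qp l)) i = 0.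
  by move=> i ilt; rewrite psbK el // subrr.
have h2 : forall j, (j < 0)%N -> (dd dn - dn n) j = 0 by [].
have h3 : forall i, (i < v)%N -> pf (Qp l) i = 0.
  by move=> i ilt; rewrite /pf -el ?tlow //; lia.
have h4 : forall j, (j < p ^ N.+1)%N -> (dd dn - Dn) j = 0.
  by move=> j jlt; rewrite psbK (dd_agree hp dn jlt) subrr.
have [_ z1] := ps_mul_low h1 h2.
have [_ z2] := ps_mul_low h3 h4.
rewrite z1 ?addn0 // z2 ?subr0 //; lia.
Qed.

End Good.


Theorem proposition3p3 (p : nat) (hp : prime p) :
  ~ exists f : nat -> tensor p,
      (forall n, tmult (f n) = ps_zero p) /\
      (forall u : tensor p, tmult u = ps_zero p -> exists n, tensor_eq u (f n)).
Proof.
move=> [f [hker hcov]].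
pose ed (x : pser p) : tensor p := [:: (x, 1); (1, - x)].
pose dn n := match pselect (exists x, tensor_eq (ed x) (f n)) with
             | left ex => projT1 (cid ex) | right _ => 0 end.
pose d := dd dn.
have ker : tmult (ed d) = ps_zero p.
  apply: funext => k; rewrite /tmult /ed big_cons big_seq1 /=.
  by rewrite -!psmulE mulr1 mul1r psoppK addrN.
have [n hn] := hcov _ ker.
have hdn : tensor_eq (ed (dn n)) (f n).
  rewrite /dn; case: pselect => [ex|nex]; first by case: cid.
  by exfalso; apply: nex; exists d.
have he : forall t s, Sx t -> Sx s -> t * (d - dn n) = s -> t = 0.
  by move=> t s; apply: dd_good.
have [phi [phiD phiS phi1 phie]] :=
  exists_phi (@Sx1 p hp) (@SxD p) (@SxN p) (@SxM p hp) he.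
pose beta (a b : pser p) : {fraction (pser p)} := phi a * b%:F.
have bal : balanced beta.
  split.
  - by move=> a a' b; rewrite /beta -psaddE phiD mulrDl.
  - by move=> a b b'; rewrite /beta -psaddE tofracD mulrDr.
  - move=> r a b; rewrite /beta -!psmulE phiS; last exact: Sx_ga.
    have tM := tofracM (ga_hom r) b; rewrite /= in tM; rewrite tM.
    by rewrite mulrCA mulrA.
have E1 := hn _ beta bal; have E2 := hdn _ beta bal.
rewrite -E2 /ed !big_cons !big_nil /beta /= phi1 !mul0r !addr0 tofrac1 !mulr1 in E1.
have phiN x : phi (- x) = - phi x.
  have h0 : phi 0 = 0.
    have := phiD 0 0; rewrite addr0 => h; apply: (addrI (phi 0)); by rewrite addr0 -h.
  by apply/eqP; rewrite -subr_eq0 opprK -phiD addNr h0.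
move: phie; rewrite phiD phiN E1 subrr => /eqP; rewrite eq_sym oner_eq0.
by [].
Qed.
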